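(* Let $k\ge 2$ be an integer, let $(G,\sigma)$ be a signed graph, and let $\beta$ be a $\mathbb{Z}_{4k}$-pc-boundary of $2G$ such that $\beta(v)\equiv 2k\cdot p^+(v)\pmod{4k}$ for every $v\in V(G)$. If $2G$ admits a strongly connected $(4k,\beta)$-orientation, then $\phi_c(G,\sigma)<\frac{2k}{k-1}$.
   Context: Graphs may have parallel edges but no loops. A signed graph $(G,\sigma)$ has $\sigma:E(G)\to\{+1,-1\}$; $p^+(v)$ is the number of positive edges incident with $v$. $2G$ is obtained from $G$ by replacing every edge with two parallel edges. For a graph $H$ and a positive integer $m$, a $\mathbb{Z}_{2m}$-pc-boundary of $H$ is a map $\beta:V(H)\to\{0,\pm1,\dots,\pm m\}$ with $\beta(v)\equiv d_H(v)\pmod 2$ for all $v$ and $\sum_v\beta(v)\equiv0\pmod{2m}$; a $(2m,\beta)$-orientation is an orientation $D$ of $H$ with $d^+_D(v)-d^-_D(v)\equiv\beta(v)\pmod{2m}$ for all $v$. An orientation $D$ is strongly connected if $d^+_D(S)>0$ and $d^-_D(S)>0$ for every nonempty proper subset $S\subset V(H)$. For positive integers $p,q$ with $p$ even, a circular $\frac pq$-flow of $(G,\sigma)$ is a pair $(D,f)$ with $D$ an orientation of $G$ and $f:E(G)\to\mathbb{Z}$ such that $|f(e)|\in\{q,\dots,p-q\}$ for every positive edge, $|f(e)|\in\{0,\dots,\frac p2-q\}\cup\{\frac p2+q,\dots,p-1\}$ for every negative edge, and $\sum_{(v,w)\in D}f(vw)-\sum_{(u,v)\in D}f(uv)\equiv0\pmod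 p$ for every vertex $v$. The circular flow index $\phi_c(G,\sigma)$ is the minimum of $\frac pq$ over all circular $\frac pq$-flows of $(G,\sigma)$. *)

(* Defs.v *)
From HB Require Import structures.
From mathcomp Require Import all_boot all_order all_algebra.
Set Implicit Arguments. Unset Strict Implicit. Unset Printing Implicit Defensive.
Import Order.TTheory GRing.Theory Num.Theory.
Local Open Scope ring_scope.

(* A (multi)graph without loops is given by a finite vertex type V, a finite
   edge type E and two endpoint maps  end1 end2 : E -> V  with
   end1 e != end2 e  (parallel edges allowed, no loops).
   An orientation D : E -> bool orients e from end1 e to end2 e iff D e. *)

Section Graph.
Variables (V E : finType) (end1 end2 : E -> V).

Definition incident (e : E) (v : V) : bool := (end1 e == v) || (end2 e == v).

Definition deg (v : V) : nat := #|[set e | incident e v]|.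

Definition tail (D : E -> bool) (e : E) : V := if D e then end1 e else end2 e.
Definition head (D : E -> bool) (e : E) : V := if D e then end2 e else end1 e.

Definition outdeg (D : E -> bool) (v : V) : nat := #|[set e | tail D e == v]|.
Definition indeg (D : E -> bool) (v : V) : nat := #|[set e | head D e == v]|.

Definition pc_boundary (m : nat) (beta : V -> int) : Prop :=
  [/\ forall v, (`|beta v| <= m)%N,
      forall v, (beta v = (deg v)%:Z %[mod 2])%Z
    & (\sum_v beta v = 0 %[mod (2 * m)%N])%Z].

Definition mod_orientation (m : nat) (beta : V -> int) (D : E -> bool) : Prop :=
  forall v, ((outdeg D v)%:Z - (indeg D v)%:Z = beta v %[mod m])%Z.

Definition strongly_connected (D : E -> bool) : Prop :=
  forall S : {set V}, S != set0 -> S != setT ->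
    (0 < #|[set e | (tail D e \in S) && (head D e \notin S)]|)%N /\
    (0 < #|[set e | (head D e \in S) && (tail D e \notin S)]|)%N.

(* Signed graph: sigma e = true means sigma(e) = +1, false means -1. *)
Definition pplus (sigma : E -> bool) (v : V) : nat :=
  #|[set e | sigma e && incident e v]|.

Definition circular_flow (sigma : E -> bool) (p q : nat)
    (D : E -> bool) (f : E -> int) : Prop :=
  [/\ forall e, sigma e -> (q <= `|f e|)%N && (`|f e| + q <= p)%N,
      forall e, ~~ sigma e ->
        (`|f e| + q <= p./2)%N || ((p./2 + q <= `|f e|)%N && (`|f e| < p)%N)
    & forall v, (\sum_(e | tail D e == v) f e - \sum_(e | head D e == v) f e
                 = 0 %[mod p])%Z].

(* phi_c(G, sigma) < r : the minimum of p/q over all circular p/q-flows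
   (p, q positive, p even) is < r, i.e. some circular p/q-flow has p/q < r. *)
Definition phi_c_lt (sigma : E -> bool) (r : rat) : Prop :=
  exists (p q : nat), [/\ (0 < p)%N, ~~ odd p, (0 < q)%N,
    (exists D f, circular_flow sigma p q D f) & p%:Q / q%:Q < r].

End Graph.

(* The graph 2G: edge set E * bool, both copies of e having e's endpoints. *)
Definition dbl_end {V E : Type} (en : E -> V) : E * bool -> V := fun x => en x.1.

(* Main.v *)
Require Import Defs.
From HB Require Import structures.
From mathcomp Require Import all_boot all_order all_algebra.
From mathcomp Require Import ring lra zify.
Import Order.TTheory GRing.Theory Num.Theory.
Local Open Scope ring_scope.

Section Circ.
Variables (V A : finType) (tl hd : A -> V).

Fixpoint walk (u w : V) (s : seq A) : bool :=
  if s is a :: s' then (tl a == u) && walk (hd a) w s' else u == w.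

Lemma walk_count u w s v : walk u w s ->
  (count (fun x => tl x == v) s + (w == v) = count (fun x => hd x == v) s + (u == v))%N.
Proof.
elim: s u => [|a s IH] u /=; first by move/eqP->.
case/andP=> /eqP <- /IH h. lia.
Qed.

Lemma sum_count (P : pred A) s : (\sum_(x | P x) count_mem x s)%N = count P s.
Proof.
elim: s => [|a s IH] /=; first by rewrite big1.
rewrite big_split /= IH; congr (_ + _)%N.
case Pa: (P a).
  rewrite (bigD1 a) //= eqxx big1 // => x /andP[_]; rewrite eq_sym => /negbTE -> //.
rewrite big1 // => x Px; case: eqP => // ax; subst; by rewrite Px in Pa.
Qed.

Definition rr := fun x y => [exists b, (tl b == x) && (hd b == y)].

Lemma connect_walk u v : connect rr u v -> exists s, walk u v s.
Proof.
move/connectP => [p]; elim: p u => [|y p IH] u /=.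
  by move=> _ ->; exists [::]; rewrite /= eqxx.
case/andP => /existsP[b /andP[/eqP tb /eqP hb]] pth lst.
have [s ws] := IH y pth lst.
by exists (b :: s); rewrite /= tb eqxx hb ws.
Qed.

Hypothesis sc : forall S : {set V}, S != set0 -> S != setT ->
  (0 < #|[set e | (tl e \in S) && (hd e \notin S)]|)%N.

Lemma sc_walk a : exists s, walk (tl a) (tl a) s && (a \in s).
Proof.
pose S := [set v | connect rr (hd a) v].
have : tl a \in S.
  apply/negPn/negP => nS.
  have S0 : S != set0 by apply/set0Pn; exists (hd a); rewrite inE connect0.
  have ST : S != setT by apply/eqP => ST; rewrite ST inE in nS.
  have := @sc S S0 ST; rewrite card_gt0 => /set0Pn [b]; rewrite inE => /andP[tb hb].
  move: tb hb; rewrite !inE => tb /negP; apply; apply: (connect_trans tb).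
  by apply: connect1; apply/existsP; exists b; rewrite !eqxx.
rewrite inE => /connect_walk [s ws].
by exists (a :: s); rewrite /= eqxx ws inE eqxx.
Qed.

Lemma circ_exists (L : seq A) : exists c : A -> nat,
  (forall v, \sum_(x | tl x == v) c x = \sum_(x | hd x == v) c x)%N /\
  forall a, a \in L -> (0 < c a)%N.
Proof.
elim: L => [|a L [c [hc pc]]].
  by exists (fun _ => 0%N); split => // v; rewrite !big1.
have [s /andP[ws ins]] := sc_walk a.
exists (fun x => c x + count_mem x s)%N; split.
  move=> v; rewrite !big_split /= hc !sum_count; congr (_ + _)%N.
  by have := @walk_count _ _ _ v ws; move/eqP; rewrite eqn_add2r => /eqP.
move=> b; rewrite inE => /orP[/eqP -> | /pc h]; last by apply: leq_trans h (leq_addr _ _).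
by rewrite addn_gt0 -has_count has_pred1 ins orbT.
Qed.

End Circ.

Lemma sumP (T : finType) (P : pred T) (F : T -> nat) :
  \sum_x (F x)%:Z * (P x)%:Z = ((\sum_(x | P x) F x)%N)%:Z.
Proof.
rewrite (big_morph Posz PoszD (erefl 0%:Z)) [RHS]big_mkcond /=.
by apply: eq_bigr => x _; case: (P x); rewrite /= ?mulr1 ?mulr0.
Qed.

Lemma sumPz (T : finType) (P : pred T) (F : T -> int) :
  \sum_(x | P x) F x = \sum_x F x * (P x)%:Z.
Proof.
rewrite big_mkcond; apply: eq_bigr => x _.
by case: (P x); rewrite /= ?mulr1 ?mulr0.
Qed.

Theorem theorem2p8 (k : nat) (V E : finType) (end1 end2 : E -> V)
  (noloop : forall e, end1 e != end2 e)
  (sigma : E -> bool) (beta : V -> int) :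
  (2 <= k)%N ->
  pc_boundary (dbl_end end1) (dbl_end end2) (2 * k) beta ->
  (forall v, (beta v = (2 * k)%N%:Z * (pplus end1 end2 sigma v)%:Z
                        %[mod (4 * k)%N])%Z) ->
  (exists D : E * bool -> bool,
      mod_orientation (dbl_end end1) (dbl_end end2) (4 * k) beta D /\
      strongly_connected (dbl_end end1) (dbl_end end2) D) ->
  phi_c_lt end1 end2 sigma ((2 * k)%N%:Q / (k%:Q - 1)).
Proof.
move=> hk _ hbeta [D [hmod hsc]].
set tl := tail (dbl_end end1) (dbl_end end2) D.
set hd := Defs.head (dbl_end end1) (dbl_end end2) D.
have sc' : forall S : {set V}, S != set0 -> S != setT ->
  (0 < #|[set e | (tl e \in S) && (hd e \notin S)]|)%N.
  by move=> S h1 h2; case: (hsc S h1 h2).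
have [c [hc pc]] := @circ_exists _ _ tl hd sc' (enum (@predT (E * bool))).
have cpos x : (0 < c x)%N by apply: pc; rewrite mem_enum.
set N := (\sum_x c x).+1.
have cltN x : (c x < N)%N by rewrite ltnS (bigD1 x) //= leq_addr.
pose w x : int := N%:Z - (c x)%:Z.
pose sg x : int := if D x then 1 else -1.
pose g e := sg (e,true) * w (e,true) + sg (e,false) * w (e,false).
have gb e : (`|g e| + 2 <= 2 * N)%N.
  rewrite /g /sg /w; have := cpos (e,true); have := cltN (e,true).
  have := cpos (e,false); have := cltN (e,false).
  case: (D (e,true)); case: (D (e,false)); lia.
pose f e := g e + (if sigma e then (2*(k*N))%N%:Z else 0).
have kN : (N <= k * N)%N by rewrite leq_pmull //; lia.
exists (4*(k*N))%N, (2*(k*N) - 2*N + 2)%N.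
split.
- lia.
- by rewrite !oddM.
- lia.
- exists (fun _ => true), f; split.
  + move=> e se; rewrite /f se; have := gb e; move=> h; apply/andP; split; lia.
  + move=> e /negbTE se; rewrite /f se addr0; apply/orP; left; have := gb e; lia.
  + move=> v; rewrite /tail /Defs.head /=.
    apply/eqP; rewrite eqz_mod_dvd subr0; apply/dvdzP.
    have e1 : \sum_(e | end1 e == v) f e - \sum_(e | end2 e == v) f e =
       \sum_e f e * ((end1 e == v)%:Z - (end2 e == v)%:Z).
      rewrite (@sumPz _ (fun e => end1 e == v)) (@sumPz _ (fun e => end2 e == v)) -sumrB; apply: eq_bigr => e _.
      by case: (end1 e == v); case: (end2 e == v) => /=; ring.
    have pb : forall F : E * bool -> int, \sum_x F x = \sum_e \sum_b F (e, b).
      by move=> F; rewrite pair_big; apply: eq_big => [[e b]|[e b] _] //.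
    have e2 : \sum_e f e * ((end1 e == v)%:Z - (end2 e == v)%:Z) =
       \sum_x w x * ((tl x == v)%:Z - (hd x == v)%:Z) +
       (2 * (k * N))%N%:Z * \sum_e ((sigma e && (end1 e == v))%:Z - (sigma e && (end2 e == v))%:Z).
      rewrite pb mulr_sumr -big_split /=; apply: eq_bigr => e _; rewrite big_bool /=.
      rewrite /f /g /sg /tl /hd /tail /Defs.head /dbl_end /=.
      by case: (D (e,true)); case: (D (e,false)); case: (sigma e);
        case: (end1 e == v); case: (end2 e == v); rewrite /=; ring.
    have od : outdeg (dbl_end end1) (dbl_end end2) D v = (\sum_(x | tl x == v) 1)%N.
      by rewrite /outdeg -sum1_card; apply: eq_bigl => x; rewrite inE.
    have id : indeg (dbl_end end1) (dbl_end end2) D v = (\sum_(x | hd x == v) 1)%N.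
      by rewrite /indeg -sum1_card; apply: eq_bigl => x; rewrite inE.
    have e3 : \sum_x w x * ((tl x == v)%:Z - (hd x == v)%:Z) =
       N%:Z * ((outdeg (dbl_end end1) (dbl_end end2) D v)%:Z -
               (indeg (dbl_end end1) (dbl_end end2) D v)%:Z).
      have -> : \sum_x w x * ((tl x == v)%:Z - (hd x == v)%:Z) =
        N%:Z * (\sum_x (1%N)%:Z * (tl x == v)%:Z - \sum_x (1%N)%:Z * (hd x == v)%:Z)
        - (\sum_x (c x)%:Z * (tl x == v)%:Z - \sum_x (c x)%:Z * (hd x == v)%:Z).
        rewrite -!sumrB mulr_sumr -sumrB; apply: eq_bigr => x _; rewrite /w; ring.
      rewrite (@sumP _ (fun x => tl x == v) (fun _ => 1%N)).
      rewrite (@sumP _ (fun x => hd x == v) (fun _ => 1%N)).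
      rewrite (@sumP _ (fun x => tl x == v) c) (@sumP _ (fun x => hd x == v) c).
      by rewrite hc subrr subr0 od id.
    have e4 : (pplus end1 end2 sigma v)%:Z =
       \sum_e (sigma e && (end1 e == v))%:Z + \sum_e (sigma e && (end2 e == v))%:Z.
      have -> : pplus end1 end2 sigma v =
          (\sum_(e | sigma e && incident end1 end2 e v) 1)%N.
        by rewrite /pplus -sum1_card; apply: eq_bigl => e; rewrite inE.
      rewrite -(@sumP _ _ (fun _ => 1%N)) -big_split /=; apply: eq_bigr => e _.
      rewrite /incident; have ne := noloop e.
      case: (sigma e); case: (end1 e =P v) => h1; case: (end2 e =P v) => h2 //=;
        try by move: ne; rewrite h1 h2 eqxx.
    have [q1 Hq1] : exists q1, beta v - (2*k)%N%:Z * (pplus end1 end2 sigma v)%:Z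
        = q1 * (4*k)%N%:Z.
      by apply/dvdzP; rewrite -eqz_mod_dvd; apply/eqP; exact: hbeta v.
    have [q2 Hq2] : exists q2, (outdeg (dbl_end end1) (dbl_end end2) D v)%:Z -
        (indeg (dbl_end end1) (dbl_end end2) D v)%:Z - beta v = q2 * (4*k)%N%:Z.
      by apply/dvdzP; rewrite -eqz_mod_dvd; apply/eqP; exact: hmod v.
    exists (\sum_e (sigma e && (end1 e == v))%:Z + q1 + q2).
    rewrite e1 e2 e3 sumrB.
    move: Hq1 Hq2; rewrite e4.
    set O := (outdeg _ _ _ _)%:Z; set I := (indeg _ _ _ _)%:Z.
    set A := \sum_e _; set B := \sum_e _.
    rewrite !PoszM => H1 H2.
    have hO : O - I = q2 * (4%:Z * k%:Z) + beta v by rewrite -H2 subrK.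
    have hb : beta v = q1 * (4%:Z * k%:Z) + 2%:Z * k%:Z * (A + B) by rewrite -H1 subrK.
    rewrite hO hb; ring.
- have cast n : (n%:Z)%:~R = n%:R :> rat by exact: pmulrn.
  rewrite !cast.
  have k0 : (0 < k%:R - 1 :> rat) by rewrite subr_gt0 ltr1n.
  have q0 : (0 < (2*(k*N)-2*N+2)%N%:R :> rat) by rewrite ltr0n; lia.
  rewrite ltr_pdivrMr // mulrAC ltr_pdivlMr //.
  rewrite natrD natrB ?natrM; last lia.
  lra.
Qed.
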